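(* Let $R$ be a $p$-torsion free perfectoid ring containing a compatible system $(p^{1/p^e})_{e\ge0}$ of $p$-power roots of $p$, and let $n\ge1$. Put $i_m=\frac1p+\cdots+\frac1{p^m}$ for $m\ge1$ and $i_0=0$. Then there exist an $\overline R$-linear map $\overline\psi_n:Q_{R,n}\to R/p^{i_n}R$ and a unit $w\in R/pR$ such that $\overline\psi_n(1)=1$ and $\overline\psi_n(V^{n-1}[a])=w\,p^{i_{n-1}}F^{-n}(a)$ for every $a\in R$.
   Context: For $\alpha=k/p^e\in\mathbb{Z}[1/p]_{\ge 0}$, $p^\alpha:=(p^{1/p^e})^k$. $\overline R=R/pR$. $W_n$: $p$-typical Witt vectors of length $n$, $[\cdot]$ Teichmüller, $V$ Verschiebung. $\Phi_{R,n}:\overline R\to W_n(R)/pW_n(R)$, $a\mapsto[\tilde a^p]$ ($\tilde a$ a lift) is a well-defined ring map, and $Q_{R,n}$ is $W_n(R)/pW_n(R)$ viewed as an $\overline R$-module via $\Phi_{R,n}$. Here $V^{n-1}[a]$ denotes the class in $Q_{R,n}$ of $V^{n-1}([a])$. For a perfectoid $R$ the $p^n$-th power map induces an isomorphism $R/p^{1/p^n}R\xrightarrow{\sim}R/pR$; $F^{-n}(a)\in R/p^{1/p^n}R$ denotes the preimage of the class of $a$, and $p^{i_{n-1}}F^{-n}(a)$ is regarded as an element of $R/p^{i_n}R$ (well defined since $i_{n-1}+p^{-n}=i_n$). *)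

(* Defs.v *)
From HB Require Import structures.
From mathcomp Require Import all_boot all_algebra.
Set Implicit Arguments.
Unset Strict Implicit.
Unset Printing Implicit Defensive.
Import GRing.Theory.
Local Open Scope ring_scope.

(* Conventions: R is a commutative ring (possibly zero), p : nat a prime,
   p%:R its image in R.  Elements of R/mR are represented by elements of R
   and equalities in R/mR by the congruences below. *)

Section Defs.
Variable R : comPzRingType.

Definition rdvd (a b : R) : Prop := exists c, b = a * c.

Definition cong (m x y : R) : Prop := rdvd m (x - y).

Definition ptorsion_free (p : nat) : Prop :=
  forall x : R, p%:R * x = 0 -> x = 0.

Definition padically_complete (p : nat) : Prop :=
  (forall x : R, (forall k, rdvd (p%:R ^+ k) x) -> x = 0) /\
  (forall x : nat -> R, (forall k, rdvd (p%:R ^+ k) (x k.+1 - x k)) ->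
     exists y : R, forall k, rdvd (p%:R ^+ k) (y - x k)).

Definition compatible_roots (p : nat) (pi : nat -> R) : Prop :=
  pi 0%N = p%:R /\ forall e, pi e.+1 ^+ p = pi e.

(* Perfectoidness of a p-torsion free ring R with pi 1 = p^{1/p}
   (so (pi 1)^p = p): R is (pi 1)-adically = p-adically complete and the
   Frobenius R/p^{1/p} R -> R/pR is bijective (BMS1, Lemma 3.10). *)
Definition perfectoid_tf (p : nat) (pi : nat -> R) : Prop :=
  padically_complete p /\
  (forall a : R, exists b : R, cong p%:R (b ^+ p) a) /\
  (forall b : R, rdvd p%:R (b ^+ p) -> rdvd (pi 1%N) b).

(* p^{i_m} with i_m = 1/p + ... + 1/p^m = (sum_{k<m} p^k)/p^m *)
Definition p_i (p : nat) (pi : nat -> R) (m : nat) : R :=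
  pi m ^+ (\sum_(k < m) p ^ k)%N.

Definition unit_mod (p : nat) (w : R) : Prop :=
  exists u : R, cong p%:R (w * u) 1.

Definition ghost (p n : nat) (x : 'I_n -> R) (i : 'I_n) : R :=
  \sum_(j < n | (j <= i)%N) p%:R ^+ j * x j ^+ (p ^ (i - j)).

Definition teich (n : nat) (a : R) (i : 'I_n) : R := if nat_of_ord i == 0%N then a else 0.

(* V^{n-1}([a]) = (0, ..., 0, a) *)
Definition verschV (n : nat) (a : R) (i : 'I_n) : R := if nat_of_ord i == n.-1 then a else 0.


(* An R̄-linear map Q_{R,n} -> R/mR, given by a lift
   f : W_n(R) -> R.  Since R is p-torsion free the ghost map is injective
   and a ring homomorphism for the Witt ring structure, so z = x + y in
   W_n(R) iff ghost z = ghost x + ghost y, etc.  The conditions say that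
   f is additive mod m, kills p W_n(R) (hence factors through
   Q_{R,n} = W_n(R)/pW_n(R)), and is linear for the R̄-module structure
   Phi_{R,n}(a) = [a~^p]. *)
Definition Qlinear (p n : nat) (m : R) (f : ('I_n -> R) -> R) : Prop :=
  (forall x y z : 'I_n -> R,
     (forall i, ghost p z i = ghost p x i + ghost p y i) ->
     cong m (f z) (f x + f y)) /\
  (forall x z : 'I_n -> R,
     (forall i, ghost p z i = p%:R * ghost p x i) -> cong m (f z) 0) /\
  (forall (a : R) (x z : 'I_n -> R),
     (forall i, ghost p z i = ghost p (@teich n (a ^+ p)) i * ghost p x i) ->
     cong m (f z) (a * f x)).

End Defs.

Arguments teich {R} n a i.
Arguments verschV {R} n a i.
Arguments ghost {R} p {n} x i.

(* Main.v *)
From HB Require Import structures.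
From mathcomp Require Import all_boot all_algebra.
From mathcomp Require Import mpoly ring zify.
From Stdlib Require Import Lia IndefiniteDescription.
Require Import Defs.
Set Implicit Arguments. Unset Strict Implicit. Unset Printing Implicit Defensive.
Import GRing.Theory Num.Theory.
Local Open Scope ring_scope.
Section Gen.
Variable A : comPzRingType.
Variable p : nat.
Hypothesis pP : prime p.

Lemma rdvd_refl (a : A) : rdvd a a. Proof. by exists 1; rewrite mulr1. Qed.
Lemma rdvd0 (a : A) : rdvd a 0. Proof. by exists 0; rewrite mulr0. Qed.
Lemma rdvd1 (a : A) : rdvd 1 a. Proof. by exists a; rewrite mul1r. Qed.
Lemma rdvdD (a b c : A) : rdvd a b -> rdvd a c -> rdvd a (b + c).
Proof. by move=> [x ->] [y ->]; exists (x + y); rewrite mulrDr. Qed.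
Lemma rdvdN (a b : A) : rdvd a b -> rdvd a (- b).
Proof. by move=> [x ->]; exists (- x); rewrite mulrN. Qed.
Lemma rdvdB (a b c : A) : rdvd a b -> rdvd a c -> rdvd a (b - c).
Proof. by move=> h1 h2; apply: rdvdD => //; apply: rdvdN. Qed.
Lemma rdvdMl (a b c : A) : rdvd a b -> rdvd a (c * b).
Proof. by move=> [x ->]; exists (c * x); rewrite mulrCA. Qed.
Lemma rdvdMr (a b c : A) : rdvd a b -> rdvd a (b * c).
Proof. by move=> h; rewrite mulrC; apply: rdvdMl. Qed.
Lemma rdvd_trans (a b c : A) : rdvd a b -> rdvd b c -> rdvd a c.
Proof. by move=> [x ->] [y ->]; exists (x * y); rewrite mulrA. Qed.
Lemma rdvd_mul (a b c d : A) : rdvd a b -> rdvd c d -> rdvd (a * c) (b * d).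
Proof. by move=> [x ->] [y ->]; exists (x * y); rewrite mulrACA. Qed.
Lemma rdvd_sum (a : A) m (F : 'I_m -> A) : (forall i, rdvd a (F i)) -> rdvd a (\sum_(i < m) F i).
Proof.
move=> h; elim/big_ind: _ => //; [exact: rdvd0| move=> x y; exact: rdvdD].
Qed.
Lemma rdvd_exp (a b : A) k : rdvd a b -> rdvd (a ^+ k) (b ^+ k).
Proof. by move=> [x ->]; exists (x ^+ k); rewrite exprMn. Qed.
Lemma rdvd_expl (a : A) k l : (k <= l)%N -> rdvd (a ^+ k) (a ^+ l).
Proof. by move=> h; exists (a ^+ (l - k)); rewrite -exprD subnKC. Qed.

Lemma binom_p (a x : A) : exists c, (a + x) ^+ p = a ^+ p + x ^+ p + p%:R * x * c.
Proof.
have p2 := prime_gt1 pP.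
case: p pP p2 => [|[|q]] // pP' _.
rewrite exprDn big_ord_recr big_ord_recl /= subn0 subnn bin0 binn !expr0 mulr1 mul1r !mulr1n.
exists (\sum_(i < q.+1) a ^+ (q.+2 - (bump 0 i)) * x ^+ i *+ ('C(q.+2, bump 0 i) %/ q.+2)).
rewrite addrAC; congr (_ + _).
rewrite mulr_sumr; apply: eq_bigr => i _ /=.
have hd : (q.+2 %| 'C(q.+2, bump 0 i))%N.
  apply: prime_dvd_bin => //; rewrite /bump /= add1n ltnS.
  by case: i => /= i; rewrite ltnS.
rewrite -{1}(divnK hd) mulnC mulrnA -mulr_natl exprS; ring.
Qed.

End Gen.

Definition pc (A : comPzRingType) (p k : nat) (a b : A) := rdvd (p%:R ^+ k) (a - b).
Definition gh (A : comPzRingType) (p : nat) (x : nat -> A) (i : nat) : A :=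
  \sum_(j < i.+1) p%:R ^+ j * x j ^+ (p ^ (i - j)).

Section Cong.
Variable A : comPzRingType.
Variable p : nat.
Hypothesis pP : prime p.
Local Notation pc := (@pc A p).

Lemma pc_refl k (a : A) : pc k a a. Proof. by rewrite /pc subrr; apply: rdvd0. Qed.
Lemma pc_sym k (a b : A) : pc k a b -> pc k b a.
Proof. by rewrite /pc => h; rewrite -opprB; apply: rdvdN. Qed.
Lemma pc_trans k (a b c : A) : pc k a b -> pc k b c -> pc k a c.
Proof. by rewrite /pc => h1 h2; rewrite -[a](subrK b) -addrA; apply: rdvdD. Qed.
Lemma pcD k (a b c d : A) : pc k a b -> pc k c d -> pc k (a + c) (b + d).
Proof. rewrite /pc => h1 h2. have -> : a + c - (b + d) = (a - b) + (c - d) by ring. by apply: rdvdD. Qed.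
Lemma pcN k (a b : A) : pc k a b -> pc k (- a) (- b).
Proof. by rewrite /pc => h; rewrite -opprD; apply: rdvdN. Qed.
Lemma pcB k (a b c d : A) : pc k a b -> pc k c d -> pc k (a - c) (b - d).
Proof. by move=> h1 h2; apply: pcD => //; apply: pcN. Qed.
Lemma pcMl k (a b c : A) : pc k a b -> pc k (c * a) (c * b).
Proof. by rewrite /pc => h; rewrite -mulrBr; apply: rdvdMl. Qed.
Lemma pc_le k l (a b : A) : (k <= l)%N -> pc l a b -> pc k a b.
Proof. by move=> hl h; apply: rdvd_trans h; apply: rdvd_expl. Qed.
Lemma pc_sum k m (F G : 'I_m -> A) : (forall i, pc k (F i) (G i)) ->
  pc k (\sum_(i < m) F i) (\sum_(i < m) G i).
Proof. by move=> h; rewrite /pc -sumrB; apply: rdvd_sum. Qed.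
Lemma pc_mulp k l (a b : A) : pc k a b -> pc (l + k) (p%:R ^+ l * a) (p%:R ^+ l * b).
Proof. by rewrite /pc exprD -mulrBr => h; apply: rdvd_mul => //; apply: rdvd_refl. Qed.
Lemma pc0 (a b : A) : pc 0 a b. Proof. by rewrite /pc expr0; apply: rdvd1. Qed.
Lemma pc_eq k (a b : A) : a = b -> pc k a b. Proof. by move=> ->; apply: pc_refl. Qed.

Lemma pc_frob (a b : A) : pc 1 ((a + b) ^+ p) (a ^+ p + b ^+ p).
Proof.
have [c ->] := binom_p pP a b.
rewrite /pc expr1; exists (b * c); ring.
Qed.

Lemma pow_lift k (a b : A) : (1 <= k)%N -> pc k a b -> pc k.+1 (a ^+ p) (b ^+ p).
Proof.
move=> k1 [c hc]; have ea : a = b + p%:R ^+ k * c by rewrite -hc addrC subrK.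
have [d hd] := binom_p pP b (p%:R ^+ k * c).
rewrite /pc ea hd.
have -> : b ^+ p + (p%:R ^+ k * c) ^+ p + p%:R * (p%:R ^+ k * c) * d - b ^+ p =
  (p%:R ^+ k * c) ^+ p + p%:R ^+ k.+1 * (c * d) by rewrite exprS; ring.
apply: rdvdD; last by exists (c * d).
  rewrite exprMn -exprM; apply: rdvdMr; apply: rdvd_expl.
  have := prime_gt1 pP; nia.
Qed.

Lemma pow_lift_iter k r (a b : A) : (1 <= k)%N -> pc k a b -> pc (k + r) (a ^+ (p ^ r)) (b ^+ (p ^ r)).
Proof.
move=> k1 h; elim: r => [|r IH]; first by rewrite addn0 !expn0 !expr1.
rewrite addnS expnS mulnC !exprM; apply: pow_lift => //; exact: leq_trans k1 (leq_addr _ _).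
Qed.

Lemma pc_frob_sum m (F : 'I_m -> A) : pc 1 ((\sum_(i < m) F i) ^+ p) (\sum_(i < m) F i ^+ p).
Proof.
elim: m F => [|m IH] F.
  by rewrite !big_ord0 expr0n gtn_eqF ?prime_gt0 //; apply: pc_refl.
rewrite !big_ord_recr /=; apply: pc_trans (pc_frob _ _) _; apply: pcD; [exact: IH|exact: pc_refl].
Qed.
End Cong.

Section Dwork.
Variable A : comPzRingType.
Variable p : nat.
Hypothesis pP : prime p.
Variable phi : {rmorphism A -> A}.
Hypothesis Hphi : forall a, pc p 1 (phi a) (a ^+ p).

Lemma dwork (H : nat -> A) : (forall i, pc p i.+1 (H i.+1) (phi (H i))) ->
  forall m, exists x, forall i, (i < m)%N -> gh p x i = H i.
Proof.
move=> hH; elim=> [|m [x hx]]; first by exists (fun _ => 0).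
case: m hx => [|k] hx.
  exists (fun _ => H 0%N) => i; rewrite ltnS leqn0 => /eqP ->.
  by rewrite /gh big_ord1 /= expr0 mul1r expn0 expr1.
have key : pc p k.+1 (H k.+1) (\sum_(j < k.+1) p%:R ^+ j * x j ^+ (p ^ (k.+1 - j))).
  apply: pc_trans (hH k) _; rewrite -hx // /gh rmorph_sum /=.
  apply: pc_sum => j; rewrite rmorphM rmorphXn rmorph_nat rmorphXn.
  have hj : (k.+1 = j + (1 + (k - j)))%N by have := ltn_ord j; lia.
  have jk : (j <= k)%N by rewrite -ltnS.
  rewrite {1}hj; apply: pc_mulp; rewrite (subSn jk) expnS exprM.
  by apply: pow_lift_iter => //; apply: Hphi.
case: key => c hc.
exists (fun j => if j == k.+1 then c else x j) => i.
rewrite ltnS leq_eqVlt => /orP [/eqP ->|hi].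
  rewrite /gh big_ord_recr /= eqxx subnn expn0 expr1.
  have -> : \sum_(j < k.+1) p%:R ^+ j * (if (j : nat) == k.+1 then c else x j) ^+ (p ^ (k.+1 - j)) =
            \sum_(j < k.+1) p%:R ^+ j * x j ^+ (p ^ (k.+1 - j)).
    by apply: eq_bigr => j _; rewrite ltn_eqF.
  by rewrite -hc addrC subrK.
rewrite -hx // /gh; apply: eq_bigr => j _; rewrite ltn_eqF //.
by apply: leq_trans (ltn_ord j) _.
Qed.
End Dwork.

Section Cong2.
Variable A : comPzRingType.
Variable p : nat.
Hypothesis pP : prime p.
Lemma pcM k (a b c d : A) : pc p k a b -> pc p k c d -> pc p k (a * c) (b * d).
Proof.
rewrite /pc => h1 h2; have -> : a * c - b * d = a * (c - d) + (a - b) * d by ring.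
by apply: rdvdD; [apply: rdvdMl | apply: rdvdMr].
Qed.
Lemma pcX k n (a b : A) : pc p k a b -> pc p k (a ^+ n) (b ^+ n).
Proof. by move=> h; elim: n => [|n IH]; rewrite ?expr0 ?exprS; [apply: pc_refl|apply: pcM]. Qed.
Lemma pc_nat_fermat n : pc p 1 ((n%:R : A) ^+ p) n%:R.
Proof.
elim: n => [|n IH]; first by rewrite expr0n gtn_eqF ?prime_gt0 //; apply: pc_refl.
rewrite mulrSr; apply: pc_trans (pc_frob pP _ _) _; apply: pcD => //.
by rewrite expr1n; apply: pc_refl.
Qed.
Lemma pc_neg_p (a : A) : pc p 1 ((- a) ^+ p) (- a ^+ p).
Proof.
have h := pc_frob pP a (- a); rewrite subrr expr0n gtn_eqF ?prime_gt0 // in h.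
rewrite /pc in h *; rewrite opprK addrC; have := rdvdN h; by rewrite sub0r opprK.
Qed.
End Cong2.

Lemma pc_rmorph (A B : comPzRingType) (f : {rmorphism A -> B}) p k a b :
  pc p k a b -> pc p k (f a) (f b).
Proof. by move=> [c hc]; exists (f c); rewrite -rmorphB hc rmorphM rmorphXn rmorph_nat. Qed.

Lemma int_fermat p (c : int) : prime p -> pc p 1 (c ^+ p) c.
Proof.
move=> pP; case: c => n.
  by have := @pc_nat_fermat int p pP n; rewrite natz.
rewrite NegzE; apply: pc_trans (pc_neg_p pP _) _; apply: pcN.
by have := @pc_nat_fermat int p pP n.+1; rewrite natz.
Qed.

Section Univ.
Variable p : nat.
Hypothesis pP : prime p.
Variable k : nat.
Definition lqU : k.-tuple {mpoly int[k]} := [tuple 'X_i ^+ p | i < k].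
Definition phiU (P : {mpoly int[k]}) : {mpoly int[k]} := comp_mpoly lqU P.

Lemma phiUX i : phiU 'X_i = 'X_i ^+ p.
Proof. by rewrite /phiU comp_mpolyXU -tnth_nth tnth_mktuple. Qed.

Lemma phiU_frob P : pc p 1 (phiU P) (P ^+ p).
Proof.
elim/mpolyind: P => [|c m P _ _ IH].
  by rewrite /phiU rmorph0 expr0n gtn_eqF ?prime_gt0 //; apply: pc_refl.
rewrite /phiU rmorphD /=; apply: pc_trans (pc_sym (pc_frob pP _ _)); apply: pcD => //.
rewrite -mul_mpolyC mpolyXE_id rmorphM /= comp_mpolyC rmorph_prod /=.
rewrite exprMn; apply: pcM.
  apply: pc_sym; rewrite -rmorphXn; apply: pc_rmorph; exact: int_fermat.
rewrite -prodrXl; apply: pc_eq; apply: eq_bigr => i _.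
by rewrite rmorphXn /= comp_mpolyXU -tnth_nth tnth_mktuple exprAC.
Qed.
End Univ.

Lemma gh_rmorph (A B : comPzRingType) (f : {rmorphism A -> B}) p (x : nat -> A) i :
  f (gh p x i) = gh p (fun j => f (x j)) i.
Proof.
rewrite /gh rmorph_sum; apply: eq_bigr => j _.
by rewrite rmorphM rmorphXn rmorph_nat rmorphXn.
Qed.

Lemma gh_phi (A : comPzRingType) (phi : {rmorphism A -> A}) p (X : nat -> A) :
  (forall j, phi (X j) = X j ^+ p) ->
  forall i, gh p X i.+1 = phi (gh p X i) + p%:R ^+ i.+1 * X i.+1.
Proof.
move=> hX i; rewrite gh_rmorph /gh big_ord_recr /= subnn expn0 expr1; congr (_ + _).
apply: eq_bigr => j _; rewrite hX -exprM -expnS subSn //.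
by rewrite -ltnS.
Qed.

Lemma transfer (S : comNzRingType) p (pP : prime p) k (v : 'I_k -> S)
  (H : nat -> {mpoly int[k]}) :
  (forall i, pc p i.+1 (H i.+1) (phiU p (H i))) ->
  forall m, exists x : nat -> S, forall i, (i < m)%N -> gh p x i = mmap intr v (H i).
Proof.
move=> hH m.
have [x hx] := @dwork _ p pP (comp_mpoly (lqU p k)) (@phiU_frob p pP k) H hH m.
exists (fun j => mmap intr v (x j)) => i hi.
by rewrite -hx // gh_rmorph.
Qed.

Section Witt.
Variable S : comNzRingType.
Variable p : nat.
Hypothesis pP : prime p.
Local Notation P := (p%:R : S).
Local Notation gh := (gh p).

Definition isW m (g : nat -> S) := exists x, forall i, (i < m)%N -> gh x i = g i.
Definition Tm (c : S) i := c ^+ (p ^ i).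
Definition Vg (g : nat -> S) i := if i is i'.+1 then P * g i' else 0.
Definition NF k (t : nat -> S) i := \sum_(j < i.+1) P ^+ j * t j ^+ (p ^ (i + k)).

Lemma p_gt0 : (0 < p)%N. Proof. exact: prime_gt0. Qed.
Lemma zexp n : (0 : S) ^+ (p ^ n) = 0.
Proof. by rewrite expr0n expn_eq0 gtn_eqF ?p_gt0. Qed.

Lemma isW_ext m g h : (forall i, (i < m)%N -> g i = h i) -> isW m g -> isW m h.
Proof. by move=> e [x hx]; exists x => i hi; rewrite hx // e. Qed.

Lemma isW_le m m' g : (m' <= m)%N -> isW m g -> isW m' g.
Proof. by move=> hm [x hx]; exists x => i hi; apply: hx; apply: leq_trans hm. Qed.

Lemma gh_ext (x y : nat -> S) i : (forall j, (j <= i)%N -> x j = y j) -> gh x i = gh y i.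
Proof. by move=> e; apply: eq_bigr => j _; rewrite e // -ltnS. Qed.

Lemma isW_T m c : isW m (Tm c).
Proof.
exists (fun j => if j == 0%N then c else 0) => i _.
rewrite /gh big_ord_recl /= expr0 mul1r subn0 big1 ?addr0 // => j _.
by rewrite /= zexp mulr0.
Qed.

Lemma isW_NF m k t : isW m (NF k t).
Proof.
exists (fun j => t j ^+ (p ^ (j + k))) => i _; rewrite /gh /NF.
apply: eq_bigr => j _; rewrite -exprM -expnD; congr (_ * _ ^+ (p ^ _)).
by have := ltn_ord j; lia.
Qed.

Lemma isW_TM m c g : isW m g -> isW m (fun i => c ^+ (p ^ i) * g i).
Proof.
move=> [x hx]; exists (fun j => c ^+ (p ^ j) * x j) => i hi.
rewrite -hx // /gh mulr_sumr; apply: eq_bigr => j _.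
have e : (p ^ j * p ^ (i - j) = p ^ i)%N.
  by rewrite -expnD subnKC // -ltnS.
rewrite exprMn -exprM e; ring.
Qed.

Lemma isW_V m g : isW m g -> isW m.+1 (Vg g).
Proof.
move=> [x hx]; exists (fun j => if j is j'.+1 then x j' else 0) => i hi.
case: i hi => [|i] hi; first by rewrite /gh big_ord1 /= zexp mulr0.
rewrite /= -hx // /gh big_ord_recl /= zexp mulr0 add0r mulr_sumr.
by apply: eq_bigr => j _; rewrite /bump /= add1n exprS -mulrA.
Qed.

Lemma isW_tail m g : isW m.+1 g ->
  exists g', isW m g' /\ forall i, (i < m)%N -> g i.+1 = g 0%N ^+ (p ^ i.+1) + P * g' i.
Proof.
move=> [x hx]; exists (gh (fun j => x j.+1)); split; first by exists (fun j => x j.+1).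
move=> i hi; rewrite -(hx i.+1) // -(hx 0%N) //.
rewrite /gh big_ord_recl big_ord1 /= !expr0 !mul1r subn0 expn0 expr1; congr (_ + _).
rewrite mulr_sumr; apply: eq_bigr => j _; by rewrite /bump /= add1n exprS -mulrA.
Qed.
End Witt.

Lemma mpoly_tf k (a b : {mpoly int[k]}) p : prime p -> p%:R * a = p%:R * b -> a = b.
Proof.
move=> pP; apply: mulfI; rewrite -mpolyC_nat mpolyC_eq0 pnatr_eq0 gtn_eqF //.
exact: prime_gt0.
Qed.

Lemma ring_add4 (A : comPzRingType) (a b c d e : A) : a + e * b + (c + e * d) - (a + c) = e * (b + d).
Proof. ring. Qed.
Lemma ring_neg2 (A : comPzRingType) (a b e : A) : - (a + e * b) - - a = e * (- b).
Proof. ring. Qed.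

Lemma ring_sub3 (A : comPzRingType) (u w c d : A) : u + w - c - (u + w - d) = d - c.
Proof. ring. Qed.

Section Witt2.
Variable S : comNzRingType.
Variable p : nat.
Hypothesis pP : prime p.
Local Notation P := (p%:R : S).
Local Notation gh := (gh p).
Local Notation isW := (isW p).

Lemma univ_isW k (v : 'I_k -> S) (H : nat -> {mpoly int[k]}) m :
  (forall i, pc p i.+1 (H i.+1) (phiU p (H i))) -> isW m (fun i => mmap intr v (H i)).
Proof. by move=> hH; have [z hz] := transfer pP v hH m; exists z. Qed.

Lemma ev_ghX k (v : 'I_k -> S) (f : nat -> 'I_k) (x : nat -> S) i :
  (forall j, (j <= i)%N -> v (f j) = x j) ->
  mmap intr v (gh (fun j => 'X_(f j)) i) = gh x i.
Proof.
move=> e; rewrite gh_rmorph; apply: gh_ext => j hj /=.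
by rewrite mmapX mmap1U e.
Qed.

Lemma ghX_phi k (f : nat -> 'I_k) i :
  gh (fun j => 'X_(f j)) i.+1 = phiU p (gh (fun j => 'X_(f j)) i) + p%:R ^+ i.+1 * 'X_(f i.+1).
Proof. by apply: (@gh_phi _ (comp_mpoly (lqU p k))) => j; apply: phiUX. Qed.

Lemma phiUD k (a b : {mpoly int[k]}) : phiU p (a + b) = phiU p a + phiU p b.
Proof. exact: rmorphD. Qed.
Lemma phiUN k (a : {mpoly int[k]}) : phiU p (- a) = - phiU p a.
Proof. exact: rmorphN. Qed.

Lemma ev_gh2 k (v : 'I_k -> S) (f1 f2 : nat -> 'I_k) (x y : nat -> S) i :
  (forall j, (j <= i)%N -> v (f1 j) = x j) -> (forall j, (j <= i)%N -> v (f2 j) = y j) ->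
  mmap intr v (gh (fun j => 'X_(f1 j)) i + gh (fun j => 'X_(f2 j)) i) = gh x i + gh y i.
Proof.
move=> e1 e2; apply: eq_trans (mmapD _ _ _ _) _.
by congr (_ + _); apply: ev_ghX.
Qed.

Definition vAdd m (x y : nat -> S) (i : 'I_(m + m).+1) : S :=
  if (i < m)%N then x i else y (i - m)%N.

Lemma isW_add m (g h : nat -> S) : isW m g -> isW m h -> isW m (fun i => g i + h i).
Proof.
move=> [x hx] [y hy].
have := @univ_isW (m + m).+1 (vAdd x y)
  (fun i => gh (fun j => 'X_(inord j)) i + gh (fun j => 'X_(inord (m + j))) i) m.
case.
  move=> i; rewrite !ghX_phi phiUD.
  by rewrite /pc; exists ('X_(inord i.+1) + 'X_(inord (m + i.+1))); rewrite ring_add4.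
move=> z hz; exists z => i hi; rewrite hz //; cbv beta.
apply: eq_trans (@ev_gh2 (m + m).+1 (vAdd x y) (fun j => inord j) (fun j => inord (m + j)) x y i _ _) _;
  last by rewrite hx ?hy.
- move=> j hj; have jm : (j < m)%N by lia.
  rewrite /vAdd inordK ?jm //; lia.
- move=> j hj; rewrite /vAdd inordK; last by lia.
  have -> : (m + j < m)%N = false by lia.
  by rewrite addKn.
Qed.

Lemma isW_opp m (g : nat -> S) : isW m g -> isW m (fun i => - g i).
Proof.
move=> [x hx].
have := @univ_isW m.+1 (fun i => x i) (fun i => - gh (fun j => 'X_(inord j)) i) m.
case.
  move=> i; rewrite !ghX_phi phiUN.
  by rewrite /pc; exists (- 'X_(inord i.+1)); rewrite ring_neg2.
move=> z hz; exists z => i hi; rewrite hz //; cbv beta.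
apply: eq_trans (mmapN _ _ _) _.
rewrite (@ev_ghX _ _ (fun j => inord j) x) ?hx //.
move=> j hj; rewrite inordK //; lia.
Qed.

Lemma isW0 m : isW m (fun _ => 0 : S).
Proof. by exists (fun _ => 0) => i _; rewrite /gh big1 // => j _; rewrite zexp // mulr0. Qed.

Lemma isW_sub m (g h : nat -> S) : isW m g -> isW m h -> isW m (fun i => g i - h i).
Proof. by move=> h1 h2; apply: isW_add => //; apply: isW_opp. Qed.
End Witt2.

Lemma frob_iter (A : comPzRingType) p (pP : prime p) N (a b : A) :
  pc p 1 ((a + b) ^+ (p ^ N)) (a ^+ (p ^ N) + b ^+ (p ^ N)).
Proof.
elim: N => [|N IH]; first by rewrite !expn0 !expr1; apply: pc_refl.
rewrite expnSr !exprM; apply: pc_trans (pcX _ IH) _; exact: pc_frob.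
Qed.

Section Witt3.
Variable S : comNzRingType.
Variable p : nat.
Hypothesis pP : prime p.
Local Notation P := (p%:R : S).
Local Notation gh := (gh p).
Local Notation isW := (isW p).

Lemma phiUB k (a b : {mpoly int[k]}) : phiU p (a - b) = phiU p a - phiU p b.
Proof. exact: rmorphB. Qed.
Lemma phiUXn k (a : {mpoly int[k]}) n : phiU p (a ^+ n) = phiU p a ^+ n.
Proof. exact: rmorphXn. Qed.
Lemma phiUM k (a b : {mpoly int[k]}) : phiU p (a * b) = phiU p a * phiU p b.
Proof. exact: rmorphM. Qed.
Lemma phiU_nat k n : phiU p (n%:R : {mpoly int[k]}) = n%:R.
Proof. exact: rmorph_nat. Qed.

Lemma ev_D k (v : 'I_k -> S) (ia ib : 'I_k) N :
  mmap intr v ('X_ia ^+ N + 'X_ib ^+ N - ('X_ia + 'X_ib) ^+ N) = v ia ^+ N + v ib ^+ N - (v ia + v ib) ^+ N.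
Proof.
have e : forall c, mmap intr v ('X_c) = v c by move=> c; rewrite mmapX mmap1U.
by rewrite !rmorphB !rmorphD !rmorphXn !rmorphD /= !e.
Qed.

Lemma ev_pmul k (v : 'I_k -> S) (a : {mpoly int[k]}) : mmap intr v (p%:R * a) = P * mmap intr v a.
Proof. by rewrite rmorphM rmorph_nat. Qed.

Lemma PA_gen k (v : 'I_k -> S) (ia ib : 'I_k) m K : (1 <= K)%N ->
  exists h, isW m h /\ forall i, (i < m)%N ->
  P * h i = v ia ^+ (p ^ (K + i)) + v ib ^+ (p ^ (K + i)) - (v ia + v ib) ^+ (p ^ (K + i)).
Proof.
move=> k1.
pose D i := ('X_ia : {mpoly int[k]}) ^+ (p ^ (K + i)) + 'X_ib ^+ (p ^ (K + i)) - ('X_ia + 'X_ib) ^+ (p ^ (K + i)).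
have hD : forall i, exists c, D i = p%:R * c.
  move=> i; have [c hc] := frob_iter pP (K + i) ('X_ia : {mpoly int[k]}) 'X_ib.
  by exists (- c); rewrite /D -[_ + _ - _]opprB hc expr1 mulrN.
have hD' : forall i, exists c, D i == p%:R * c by move=> i; have [c hc] := hD i; exists c; apply/eqP.
pose H i := xchoose (hD' i).
have hH : forall i, D i = p%:R * H i by move=> i; apply/eqP; exact: (xchooseP (hD' i)).
have phiA : phiU p 'X_ia = 'X_ia ^+ p by apply: phiUX.
have phiB : phiU p 'X_ib = 'X_ib ^+ p by apply: phiUX.
have hd : forall i, pc p i.+1 (H i.+1) (phiU p (H i)).
  move=> i.
  have e1 : p%:R * (H i.+1 - phiU p (H i)) =
     ('X_ia ^+ p + 'X_ib ^+ p) ^+ (p ^ (K + i)) - (('X_ia + 'X_ib) ^+ p) ^+ (p ^ (K + i)).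
    rewrite mulrBr -hH.
    have -> : p%:R * phiU p (H i) = phiU p (p%:R * H i) by rewrite phiUM phiU_nat.
    rewrite -hH /D !phiUB !phiUD !phiUXn phiUD phiA phiB addnS expnS !exprM.
    rewrite -!exprM [(p * _)%N]mulnC !exprM.
    apply: eq_trans (ring_sub3 _ _ _ _) _; by rewrite exprAC.
  have [c hc] := pow_lift_iter pP (K + i) (leqnn 1) (pc_sym (pc_frob pP ('X_ia : {mpoly int[k]}) 'X_ib)).
  rewrite hc add1n exprS -mulrA in e1.
  have e2 := mpoly_tf pP e1.
  exists (p%:R ^+ ((K + i) - i.+1) * c); rewrite e2 mulrA -exprD subnKC //; lia.
have [z hz] := transfer pP v hd m.
exists (gh z); split; first by exists z.
move=> i hi; rewrite hz //; apply: eq_trans (esym (ev_pmul _ _)) _.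
by rewrite -hH ev_D.
Qed.
End Witt3.

Section Witt4.
Variable S : comNzRingType.
Variable p : nat.
Hypothesis pP : prime p.
Hypothesis tf : forall x y : S, p%:R * x = p%:R * y -> x = y.
Local Notation P := (p%:R : S).
Local Notation gh := (gh p).
Local Notation isW := (isW p).
Local Notation Tm := (Tm p).
Local Notation Vg := (Vg p).
Local Notation NF := (NF p).

Definition cW m (g h : nat -> S) :=
  exists u, isW m u /\ forall i, (i < m)%N -> g i - h i = P * u i.

Lemma PA2 m k (a b : S) : (1 <= k)%N -> exists h, isW m h /\ forall i, (i < m)%N ->
  P * h i = a ^+ (p ^ (k + i)) + b ^+ (p ^ (k + i)) - (a + b) ^+ (p ^ (k + i)).
Proof.
move=> k1; have := @PA_gen S p pP 2 (fun i => if i == ord0 then a else b) ord0 ord_max m k k1.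
by [].
Qed.

Lemma cW_eq m (g h : nat -> S) : (forall i, (i < m)%N -> g i = h i) -> cW m g h.
Proof. by move=> e; exists (fun _ => 0); split; [apply: isW0|move=> i hi; rewrite e // subrr mulr0]. Qed.
Lemma cW_refl m (g : nat -> S) : cW m g g. Proof. exact: cW_eq. Qed.
Lemma cW_sym m (g h : nat -> S) : cW m g h -> cW m h g.
Proof.
move=> [u [hu e]]; exists (fun i => - u i); split; first exact: isW_opp.
by move=> i hi; rewrite mulrN -e // opprB.
Qed.
Lemma cW_trans m (g h l : nat -> S) : cW m g h -> cW m h l -> cW m g l.
Proof.
move=> [u [hu e]] [v [hv f]]; exists (fun i => u i + v i); split; first exact: isW_add.
by move=> i hi; rewrite mulrDr -e // -f // addrA subrK.
Qed.
Lemma cW_add m (g h g' h' : nat -> S) : cW m g h -> cW m g' h' ->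
  cW m (fun i => g i + g' i) (fun i => h i + h' i).
Proof.
move=> [u [hu e]] [v [hv f]]; exists (fun i => u i + v i); split; first exact: isW_add.
by move=> i hi; rewrite mulrDr -e // -f //; ring.
Qed.
Lemma cW_opp m (g h : nat -> S) : cW m g h -> cW m (fun i => - g i) (fun i => - h i).
Proof.
move=> [u [hu e]]; exists (fun i => - u i); split; first exact: isW_opp.
by move=> i hi; rewrite mulrN -e //; ring.
Qed.
Lemma cW_sub m (g h g' h' : nat -> S) : cW m g h -> cW m g' h' ->
  cW m (fun i => g i - g' i) (fun i => h i - h' i).
Proof. by move=> h1 h2; apply: cW_add h1 (cW_opp h2). Qed.
Lemma cW_TM m c (g h : nat -> S) : cW m g h ->
  cW m (fun i => c ^+ (p ^ i) * g i) (fun i => c ^+ (p ^ i) * h i).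
Proof.
move=> [u [hu e]]; exists (fun i => c ^+ (p ^ i) * u i); split; first exact: isW_TM.
by move=> i hi; rewrite -mulrBr e //; ring.
Qed.
Lemma cW_V m (g h : nat -> S) : cW m g h -> cW m.+1 (Vg g) (Vg h).
Proof.
move=> [u [hu e]]; exists (Vg u); split; first exact: isW_V.
by case=> [|i] hi; rewrite /Vg ?subrr ?mulr0 // -mulrBr e.
Qed.
Lemma cW_ext m (g g' h h' : nat -> S) : (forall i, (i < m)%N -> g i = g' i) ->
  (forall i, (i < m)%N -> h i = h' i) -> cW m g h -> cW m g' h'.
Proof. by move=> e1 e2 [u [hu e]]; exists u; split => // i hi; rewrite -e1 // -e2 // e. Qed.

Lemma NF_S k (t : nat -> S) i : NF k t i.+1 = t 0%N ^+ (p ^ (k + i.+1)) + P * NF k.+1 (fun j => t j.+1) i.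
Proof.
rewrite /NF big_ord_recl /= expr0 mul1r; congr (_ + _); first by rewrite addnC.
rewrite mulr_sumr; apply: eq_bigr => j _.
by rewrite /bump /= add1n exprS -mulrA addnS addSn.
Qed.
Lemma NF_0 k (t : nat -> S) : NF k t 0 = t 0%N ^+ (p ^ k).
Proof. by rewrite /NF big_ord1 /= expr0 mul1r add0n. Qed.

Lemma NF_PA m : forall k (t s : nat -> S), (1 <= k)%N ->
  cW m (fun i => NF k t i + NF k s i) (NF k (fun j => t j + s j)).
Proof.
elim: m => [|m IH] k t s k1.
  by exists (fun _ => 0); split; [apply: isW0|].
have [h0 [hh0 e0]] := PA2 m.+1 (t 0%N) (s 0%N) k1.
have [u [hu eu]] := IH k.+1 (fun j => t j.+1) (fun j => s j.+1) (leqW k1).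
exists (fun i => h0 i + Vg u i); split; first by apply: isW_add => //; apply: isW_V.
case=> [|i] hi.
  by rewrite !NF_0 /Vg addr0 e0 // addn0.
rewrite !NF_S /Vg mulrDr e0 // -eu //.
ring.
Qed.

Lemma NF_sub m k (t s : nat -> S) : (1 <= k)%N ->
  cW m (fun i => NF k t i - NF k s i) (NF k (fun j => t j - s j)).
Proof.
move=> k1; have h := cW_sub (NF_PA m (fun j => t j - s j) s k1) (cW_refl m (NF k s)).
apply: cW_sym; move: h; apply: cW_ext => i _; first by rewrite addrK.
by rewrite /NF; congr (_ - _); apply: eq_bigr => j _; rewrite subrK.
Qed.
End Witt4.

Section Witt5.
Variable S : comNzRingType.
Variable p : nat.
Hypothesis pP : prime p.
Hypothesis tf : forall x y : S, p%:R * x = p%:R * y -> x = y.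
Hypothesis surj : forall a : S, exists b c, a = b ^+ p + p%:R * c.
Local Notation P := (p%:R : S).
Local Notation gh := (gh p).
Local Notation isW := (isW p).
Local Notation Tm := (Tm p).
Local Notation Vg := (Vg p).
Local Notation NF := (NF p).
Local Notation cW := (cW p).

Lemma surj_iter k (a : S) : exists b c, a = b ^+ (p ^ k) + P * c.
Proof.
elim: k a => [|k IH] a; first by exists a, 0; rewrite expn0 expr1 mulr0 addr0.
have [b [c ->]] := IH a; have [b' [c' eb]] := surj b.
have h : pc p 1 (b ^+ (p ^ k)) ((b' ^+ p) ^+ (p ^ k)) by apply: pcX; rewrite eb; exists c'; rewrite expr1; ring.
case: h => d hd; exists b', (d + c); rewrite expnS exprM -[b ^+ _](subrK ((b' ^+ p) ^+ (p ^ k))) hd expr1.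
by rewrite exprAC; ring.
Qed.

Lemma isW_nat m n : isW m (fun _ => n%:R : S).
Proof.
elim: n => [|n IH]; first exact: isW0.
apply: (@isW_ext _ _ m (fun i => n%:R + Tm 1 i)); last by apply: isW_add => //; apply: isW_T.
by move=> i _; rewrite /Tm expr1n mulrS addrC.
Qed.

Definition kappa i : S := 1 - P ^+ (p ^ i.+1 - 1).

Lemma PexpS i : P * P ^+ (p ^ i.+1 - 1) = P ^+ (p ^ i.+1).
Proof. by rewrite -exprS subn1 prednK // expn_gt0 prime_gt0. Qed.

Lemma isW_kappa m : isW m kappa.
Proof.
have h : isW m.+1 (fun i => P - Tm P i).
  by apply: isW_sub => //; [exact: (isW_nat m.+1 p)|apply: isW_T].
have [g' [hg' eg]] := isW_tail h.
apply: isW_ext hg' => i hi; have := eg i hi.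
rewrite /Tm expn0 expr1 subrr zexp // add0r => e.
by apply: tf; rewrite -e /kappa mulrBr mulr1 PexpS.
Qed.

Lemma kappa_eq (d : S) i : (P * d) ^+ (p ^ i.+1) = P * d ^+ (p ^ i.+1) - P * ((d ^+ p) ^+ (p ^ i) * kappa i).
Proof.
rewrite -exprM -expnS /kappa exprMn.
have e : P ^+ (p ^ i.+1) = P * P ^+ (p ^ i.+1 - 1) by rewrite PexpS.
rewrite e; ring.
Qed.

Lemma Dec m : forall k (g : nat -> S), isW m g -> exists t, cW m g (NF k t).
Proof.
elim: m => [|m IH] k g hg.
  by exists (fun _ => 0); exists (fun _ => 0); split; [apply: isW0|].
have [t0 [d ea]] := surj_iter k (g 0%N).
have hy : isW m.+1 (fun i => g i - Tm (t0 ^+ (p ^ k)) i) by apply: isW_sub => //; apply: isW_T.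
have [y' [hy' ey]] := isW_tail hy.
have hh : isW m (fun i => y' i - (d ^+ p) ^+ (p ^ i) * kappa i).
  by apply: isW_sub => //; apply: isW_TM; apply: isW_kappa.
have [s [w [hw ew]]] := IH k.+1 _ hh.
exists (fun j => if j is j'.+1 then s j' else t0).
exists (fun i => Tm d i + Vg w i); split; first by apply: isW_add => //; [apply: isW_T|apply: isW_V].
case=> [|i] hi.
  by rewrite NF_0 /= /Tm /Vg expn0 expr1 addr0 ea; ring.
have e1 := ey i hi.
have e0 : g 0%N - Tm (t0 ^+ (p ^ k)) 0 = P * d by rewrite /Tm expn0 expr1 ea; ring.
have ex : Tm (t0 ^+ (p ^ k)) i.+1 = t0 ^+ (p ^ (k + i.+1)) by rewrite /Tm -exprM -expnD.
rewrite e0 kappa_eq ex in e1.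
rewrite NF_S /= /Vg /Tm.
have -> : g i.+1 = t0 ^+ (p ^ (k + i.+1)) + (P * d ^+ (p ^ i.+1) - P * ((d ^+ p) ^+ (p ^ i) * kappa i) + P * y' i).
  by rewrite -e1; ring.
by rewrite -(ew i hi); ring.
Qed.
End Witt5.

Section Perf.
Variable S : comNzRingType.
Variable p : nat.
Hypothesis pP : prime p.
Variable pi : nat -> S.
Local Notation P := (p%:R : S).
Hypothesis tf0 : forall x : S, P * x = 0 -> x = 0.
Hypothesis hpi0 : pi 0%N = P.
Hypothesis hpiS : forall e, pi e.+1 ^+ p = pi e.
Hypothesis hinj : forall b : S, rdvd P (b ^+ p) -> rdvd (pi 1%N) b.

Lemma tf (x y : S) : P * x = P * y -> x = y.
Proof. by move=> e; apply/eqP; rewrite -subr_eq0; apply/eqP; apply: tf0; rewrite mulrBr e subrr. Qed.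

Lemma pi_exp a b : pi (a + b) ^+ (p ^ b) = pi a.
Proof.
elim: b => [|b IH]; first by rewrite addn0 expn0 expr1.
by rewrite addnS expnS exprM hpiS IH.
Qed.
Lemma pi_expP e : pi e ^+ (p ^ e) = P.
Proof. by have := pi_exp 0 e; rewrite add0n hpi0. Qed.

Lemma pi_tf0 e k (x : S) : pi e ^+ k * x = 0 -> x = 0.
Proof.
elim: k x => [|k IH] x; first by rewrite expr0 mul1r.
move=> h; apply: IH; apply: tf0.
have pe : (0 < p ^ e)%N by rewrite expn_gt0 prime_gt0.
rewrite -(pi_expP e) -(prednK pe) exprS.
have e1 : pi e * (pi e ^+ (p ^ e).-1 * (pi e ^+ k * x)) = pi e ^+ (p ^ e).-1 * (pi e ^+ k.+1 * x) by rewrite exprS; ring.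
by rewrite -mulrA e1 h mulr0.
Qed.
Lemma pi_tf e k (x y : S) : pi e ^+ k * x = pi e ^+ k * y -> x = y.
Proof. by move=> e1; apply/eqP; rewrite -subr_eq0; apply/eqP; apply: (@pi_tf0 e k); rewrite mulrBr e1 subrr. Qed.

Lemma root_inj e k (b : S) : (k <= p ^ e)%N -> rdvd (pi e ^+ k) (b ^+ p) -> rdvd (pi e.+1 ^+ k) b.
Proof.
move=> hk [c hc].
set z := b * pi e.+1 ^+ (p ^ e - k).
have hz : z ^+ p = P * c.
  by rewrite /z exprMn -exprM mulnC exprM hpiS hc mulrAC -exprD subnKC // pi_expP.
have [y hy] := hinj (ex_intro _ c hz).
have e1 : pi 1%N = pi e.+1 ^+ (p ^ e) by rewrite -(pi_exp 1 e) add1n.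
exists y; apply: (@pi_tf e.+1 (p ^ e - k)).
rewrite mulrC -/z hy e1 mulrA -exprD subnK //; ring.
Qed.

Definition NN j := (\sum_(k < j) p ^ k)%N.
Lemma NN_S j : NN j.+1 = (NN j + p ^ j)%N.
Proof. by rewrite /NN big_ord_recr. Qed.
Lemma NN_lt j : (NN j < p ^ j)%N.
Proof.
elim: j => [|j IH]; first by rewrite /NN big_ord0.
rewrite NN_S expnS; have := prime_gt1 pP; nia.
Qed.

Lemma ppE j : p_i p pi j = pi j ^+ NN j. Proof. by []. Qed.

Definition qq j := pi j.+1 ^+ NN j.
Lemma pp_S j : p_i p pi j.+1 = pi 1%N * qq j.
Proof.
rewrite ppE NN_S exprD /qq mulrC; congr (_ * _).
by rewrite -(pi_exp 1 j) add1n.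
Qed.
Lemma qq_p j : qq j ^+ p = p_i p pi j.
Proof. by rewrite /qq -exprM mulnC exprM hpiS. Qed.

Lemma P_pp m : rdvd (p_i p pi m) P.
Proof.
rewrite ppE -(pi_expP m) -(subnKC (ltnW (NN_lt m))) exprD.
by exists (pi m ^+ (p ^ m - NN m)).
Qed.

Lemma pp_pi1 j : (1 <= j)%N -> rdvd (pi 1%N) (p_i p pi j).
Proof.
case: j => // j _; rewrite pp_S; exists (qq j); by [].
Qed.

Lemma pp0 : p_i p pi 0 = 1. Proof. by rewrite ppE /NN big_ord0 expr0. Qed.
End Perf.

Section Main.
Variable S : comNzRingType.
Variable p : nat.
Hypothesis pP : prime p.
Variable pi : nat -> S.
Local Notation P := (p%:R : S).
Hypothesis tf0 : forall x : S, P * x = 0 -> x = 0.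
Hypothesis hpi0 : pi 0%N = P.
Hypothesis hpiS : forall e, pi e.+1 ^+ p = pi e.
Hypothesis hinj : forall b : S, rdvd P (b ^+ p) -> rdvd (pi 1%N) b.
Hypothesis hsurj : forall a : S, exists b, cong P (b ^+ p) a.

Local Notation pp := (p_i p pi).
Local Notation isW := (isW p).
Local Notation NF := (NF p).
Local Notation cW := (cW p).

Lemma tfS (x y : S) : P * x = P * y -> x = y. Proof. exact: tf. Qed.
Lemma surjS (a : S) : exists b c, a = b ^+ p + P * c.
Proof. by have [b [c hc]] := hsurj a; exists b, (- c); rewrite mulrN -hc; ring. Qed.

Definition Theta (w t : nat -> S) m := \sum_(j < m) w j * pp j * t j.
Definition WDP m w := forall t, cW m (NF 1 t) (fun _ => 0) -> rdvd (pp m) (Theta w t m).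

Lemma NF_shift k (t : nat -> S) i : NF k.+1 t i = NF k (fun j => t j ^+ p) i.
Proof. by rewrite /NF; apply: eq_bigr => j _; rewrite -exprM -expnS addnS. Qed.

Lemma NF_scale (a : S) (t : nat -> S) i : (a ^+ p) ^+ (p ^ i) * NF 1 t i = NF 1 (fun j => a * t j) i.
Proof.
rewrite /NF mulr_sumr; apply: eq_bigr => j _; rewrite exprMn -exprM -expnS addn1; ring.
Qed.

Lemma unit_of_pi1 (u : S) : rdvd (pi 1%N) (u - 1) -> exists c, cong P (c * u) 1.
Proof.
move=> [a ha]; set y := 1 - u.
exists (\sum_(i < p) y ^+ i).
have e : (\sum_(i < p) y ^+ i) * u = 1 - y ^+ p.
  have := subrXX 1 y p; rewrite expr1n => ->.
  have -> : 1 - y = u by rewrite /y; ring.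
  rewrite mulrC; congr (_ * _); apply: eq_bigr => i _; by rewrite expr1n mul1r.
have hy : y = - (pi 1%N * a) by rewrite /y -ha; ring.
rewrite /cong e hy exprNn exprMn hpiS hpi0.
by exists (- ((-1) ^+ p * a ^+ p)); ring.
Qed.

Lemma unit_root (v b : S) : unit_mod p v -> cong P (b ^+ p) v -> unit_mod p b.
Proof.
move=> [z [c hc]] [d hd]; exists (b ^+ p.-1 * z).
exists (c + d * z); rewrite mulrA -exprS prednK ?prime_gt0 //.
have -> : b ^+ p = v + P * d by rewrite -hd; ring.
have -> : (v + P * d) * z - 1 = (v * z - 1) + P * (d * z) by ring.
by rewrite hc; ring.
Qed.

Lemma unit_negM (c v : S) : unit_mod p c -> unit_mod p v -> unit_mod p (- c * v).
Proof.
move=> [z1 [a1 h1]] [z2 [a2 h2]]; exists (- z1 * z2).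
exists (a1 * (v * z2) + a2).
have -> : - c * v * (- z1 * z2) - 1 = (c * z1 - 1) * (v * z2) + (v * z2 - 1) by ring.
by rewrite h1 h2; ring.
Qed.

Lemma rdvd_P_pp m (x : S) : rdvd P x -> rdvd (pp m) x.
Proof. by move=> h; apply: rdvd_trans h; apply: P_pp. Qed.

Lemma WD_base : WDP 1 (fun _ => 1).
Proof.
move=> t [u [hu eu]]; have := eu 0%N isT; rewrite NF_0 subr0 expn1 => e.
have [c hc] := hinj (ex_intro _ (u 0%N) e).
rewrite /Theta big_ord1 /= pp0 !mul1r /p_i /= big_ord1 expn0 expr1; by exists c.
Qed.

Lemma cW_to0 m (g h : nat -> S) : cW m g h -> cW m (fun i => g i - h i) (fun _ => 0).
Proof. by move=> [u [hu e]]; exists u; split => // i hi; rewrite subr0 e. Qed.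

Lemma WD_step m w' : (1 <= m)%N -> w' 0%N = 1 -> (forall j, unit_mod p (w' j)) -> WDP m w' ->
  exists w, w 0%N = 1 /\ (forall j, unit_mod p (w j)) /\ WDP m.+1 w.
Proof.
move=> m1 w0' wu' WD'.
have [e he] := Dec pP tfS surjS 1 (isW_kappa pP tfS m).
set u := Theta w' e m.
have hu1 : rdvd (pi 1%N) (u - 1).
  have [v [hv ev]] := he; have := ev 0%N m1.
  rewrite NF_0 /kappa expn1 => e0.
  have h1 : rdvd P ((e 0%N - 1) ^+ p).
    have := pc_frob pP (e 0%N) (-1); have := pc_neg_p pP (1 : S); rewrite expr1n => hn hf.
    have hf2 := pc_trans hf (pcD (@pc_refl S p 1 (e 0%N ^+ p)) hn).
    apply: rdvd_trans (_ : rdvd (P ^+ 1) _); first by rewrite expr1; apply: rdvd_refl.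
    have -> : (e 0%N - 1) ^+ p = ((e 0%N + -1) ^+ p - (e 0%N ^+ p + -1)) + (e 0%N ^+ p - 1) by ring.
    apply: rdvdD => //; rewrite expr1.
    have -> : e 0%N ^+ p - 1 = - (P * v 0%N) - P * P ^+ (p - 1).-1.
      rewrite -e0 -exprS prednK; first ring.
      by rewrite subn_gt0 prime_gt1.
    by apply: rdvdB; [apply: rdvdN; exists (v 0%N)| exists (P ^+ (p - 1).-1)].
  have [c hc] := hinj h1.
  have [m' em] : exists m', m = m'.+1 by exists m.-1; rewrite prednK.
  rewrite /u /Theta em big_ord_recl /= w0' pp0 !mul1r.
  have -> : e 0%N + \sum_(i < m') w' (bump 0 i) * pp (bump 0 i) * e (bump 0 i) - 1 =
            (e 0%N - 1) + \sum_(i < m') w' (bump 0 i) * pp (bump 0 i) * e (bump 0 i) by ring.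
  apply: rdvdD; first by exists c.
  apply: rdvd_sum => i; apply: rdvdMr; apply: rdvdMl; exact: pp_pi1.
have [c' hc'] := unit_of_pi1 hu1.
have hb : forall j, exists b, cong P (b ^+ p) (- c' * w' j) by move=> j; apply: hsurj.
pose B j := proj1_sig (@constructive_indefinite_description _ _ (hb j)).
have hB : forall j, cong P (B j ^+ p) (- c' * w' j) by move=> j; exact: (proj2_sig (@constructive_indefinite_description _ _ (hb j))).
have c'u : unit_mod p c' by exists u.
exists (fun j => if j is j'.+1 then B j' else 1); split => //; split.
  case=> [|j]; first by exists 1; rewrite mulr1 /cong subrr; apply: rdvd0.
  by apply: unit_root (hB j); apply: unit_negM.
move=> t [u0 [hu0 eu]].
have e0 := eu 0%N isT; rewrite NF_0 subr0 expn1 in e0.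
have [tau htau] := hinj (ex_intro _ (u0 0%N) e0).
have pi1p : pi 1%N ^+ p = P by rewrite hpiS hpi0.
have hu00 : u0 0%N = tau ^+ p by apply: tfS; rewrite -e0 htau exprMn pi1p.
have [u' [hu' eu']] := isW_tail hu0.
pose A j := t j.+1 ^+ p.
pose X i := ((tau ^+ p) ^+ p) ^+ (p ^ i).
have C1 : cW m (NF 1 A) (fun i => X i * kappa S p i).
  exists u'; split => // i hi.
  have E := eu i.+1 hi; rewrite NF_S subr0 NF_shift eu' // hu00 htau in E.
  have h1 : (pi 1%N * tau) ^+ (p ^ (1 + i.+1)) = P * (P ^+ (p ^ i.+1 - 1) * X i).
    rewrite exprMn mulrA PexpS // /X -!exprM.
    have -> : (p ^ (1 + i.+1) = p * p ^ i.+1)%N by rewrite add1n expnS.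
    by rewrite exprM pi1p !expnS !mulnA.
  have h2 : (tau ^+ p) ^+ (p ^ i.+1) = X i by rewrite /X -!exprM !expnS !mulnA.
  rewrite h1 h2 in E.
  apply: tfS; rewrite /kappa.
  have -> : P * (NF 1 A i - X i * (1 - P ^+ (p ^ i.+1 - 1))) =
     (P * (P ^+ (p ^ i.+1 - 1) * X i) + P * NF 1 A i) - P * X i by ring.
  by rewrite E; ring.
have C2 : cW m (fun i => X i * kappa S p i) (NF 1 (fun j => tau ^+ p * e j)).
  have := cW_TM ((tau ^+ p) ^+ p) he; apply: cW_ext => i hi //.
  exact: NF_scale.
have C4 := cW_to0 (cW_trans pP C1 C2).
have C5 : cW m (NF 1 (fun j => A j - tau ^+ p * e j)) (fun _ => 0).
  have C6 := cW_sym pP (@NF_sub S p pP m 1%N A (fun j => tau ^+ p * e j) (leqnn 1)).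
  exact: (@cW_trans S p pP m _ _ _ C6 C4).
have W := WD' _ C5.
set Z := \sum_(j < m) w' j * pp j * A j.
have eT : Theta w' (fun j => A j - tau ^+ p * e j) m = Z - tau ^+ p * u.
  rewrite /Theta /Z /u mulr_sumr -sumrB; apply: eq_bigr => j _; ring.
rewrite eT in W.
set Sx := \sum_(j < m) B j * qq p pi j * t j.+1.
have eTh : Theta (fun j => if j is j'.+1 then B j' else 1) t m.+1 = pi 1%N * (tau + Sx).
  rewrite /Theta big_ord_recl /= pp0 htau mulrDr !mul1r; congr (_ + _).
  rewrite /Sx mulr_sumr; apply: eq_bigr => j _.
  by rewrite /bump /= add1n pp_S //; ring.
have cpc : forall a b : S, cong P a b -> pc p 1 a b by move=> a b; rewrite /pc expr1.
have hf : pc p 1 ((tau + Sx) ^+ p) (tau ^+ p - c' * Z).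
  apply: pc_trans (pc_frob pP _ _) _; apply: pcD; first exact: pc_refl.
  apply: pc_trans (pc_frob_sum pP _) _.
  have -> : - (c' * Z) = \sum_(j < m) (- c' * w' j) * pp j * A j.
    by rewrite /Z mulr_sumr -sumrN; apply: eq_bigr => j _; ring.
  apply: pc_sum => j; rewrite !exprMn qq_p //; apply: pcM; last exact: pc_refl.
  by rewrite mulrC [_ * pp _]mulrC; apply: pcMl; apply: cpc.
have Hr : rdvd (pp m) ((tau + Sx) ^+ p).
  have -> : (tau + Sx) ^+ p = ((tau + Sx) ^+ p - (tau ^+ p - c' * Z)) - tau ^+ p * (c' * u - 1) - c' * (Z - tau ^+ p * u) by ring.
  apply: rdvdB; first apply: rdvdB.
  - by apply: rdvd_P_pp; move: hf; rewrite /pc expr1.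
  - by apply: rdvd_P_pp; apply: rdvdMl.
  - by apply: rdvdMl.
have Hr2 := root_inj pP tf0 hpi0 hpiS hinj (ltnW (NN_lt pP m)) Hr.
rewrite eTh; apply: rdvd_trans (_ : rdvd (pp m.+1) (pi 1%N * pi m.+1 ^+ NN p m)) _.
  by rewrite pp_S //; apply: rdvd_refl.
by apply: rdvd_mul => //; apply: rdvd_refl.
Qed.


Lemma WD_all m : (1 <= m)%N ->
  exists w, w 0%N = 1 /\ (forall j, unit_mod p (w j)) /\ WDP m w.
Proof.
elim: m => // m IH.
case: m IH => [|m] IH _.
  exists (fun _ => 1); split => //; split; last exact: WD_base.
  by move=> j; exists 1; rewrite mulr1 /cong subrr; apply: rdvd0.
have [w' [h0 [hu hw]]] := IH isT.
exact: (WD_step (m:=m.+1) isT h0 hu hw).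
Qed.

Lemma Theta_lin w (t s : nat -> S) (a : S) m :
  Theta w (fun j => t j - a * s j) m = Theta w t m - a * Theta w s m.
Proof. by rewrite /Theta mulr_sumr -sumrB; apply: eq_bigr => j _; ring. Qed.

End Main.

Section Final.
Variable S : comNzRingType.
Variable p : nat.
Hypothesis pP : prime p.
Local Notation P := (p%:R : S).

Lemma ghost_gh n (x : 'I_n.+1 -> S) (i : 'I_n.+1) :
  ghost p x i = gh p (fun j => x (inord j)) i.
Proof.
rewrite /ghost /gh (big_ord_widen n.+1 (fun j => P ^+ j * x (inord j) ^+ (p ^ (i - j))) (ltn_ord i)).
by apply: eq_bigr => j _; rewrite inord_val.
Qed.

Lemma gh_single k (c : S) i :
  gh p (fun j => if j == k then c else 0) i = if (k <= i)%N then P ^+ k * c ^+ (p ^ (i - k)) else 0.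
Proof.
rewrite /gh; case: ifP => hk.
  rewrite (bigD1 (Ordinal (hk : (k < i.+1)%N))) //= eqxx big1 ?addr0 // => j hj.
  by rewrite ifN ?zexp ?mulr0 //; apply: contra hj => /eqP hj; apply/eqP/val_inj.
rewrite big1 // => j _; rewrite ifN ?zexp ?mulr0 //.
by apply/eqP => hj; move: (ltn_ord j); rewrite hj ltnS hk.
Qed.

Lemma NF_single k (b : S) i :
  NF p 1 (fun j => if j == k then b else 0) i = if (k <= i)%N then P ^+ k * b ^+ (p ^ (i + 1)) else 0.
Proof.
rewrite /NF; case: ifP => hk.
  rewrite (bigD1 (Ordinal (hk : (k < i.+1)%N))) //= eqxx big1 ?addr0 // => j hj.
  by rewrite ifN ?zexp ?mulr0 //; apply: contra hj => /eqP hj; apply/eqP/val_inj.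
rewrite big1 // => j _; rewrite ifN ?zexp ?mulr0 //.
by apply/eqP => hj; move: (ltn_ord j); rewrite hj ltnS hk.
Qed.

Lemma Theta_single (pi : nat -> S) w k (b : S) m : (k < m)%N ->
  Theta p pi w (fun j => if j == k then b else 0) m = w k * p_i p pi k * b.
Proof.
move=> hk; rewrite /Theta (bigD1 (Ordinal hk)) //= eqxx big1 ?addr0 // => j hj.
by rewrite ifN ?mulr0 //; apply: contra hj => /eqP hj; apply/eqP/val_inj.
Qed.
End Final.



Section MainNZ.
Variable S : comNzRingType.
Variable p : nat.
Hypothesis pP : prime p.
Variable pi : nat -> S.
Local Notation P := (p%:R : S).
Hypothesis tf0 : forall x : S, P * x = 0 -> x = 0.
Hypothesis hpi0 : pi 0%N = P.
Hypothesis hpiS : forall e, pi e.+1 ^+ p = pi e.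
Hypothesis hinj : forall b : S, rdvd P (b ^+ p) -> rdvd (pi 1%N) b.
Hypothesis hsurj : forall a : S, exists b, cong P (b ^+ p) a.

Lemma WD_cong n w (WD : WDP p pi n w) (t s : nat -> S) :
  cW p n (NF p 1 t) (NF p 1 s) -> rdvd (p_i p pi n) (Theta p pi w t n - Theta p pi w s n).
Proof.
move=> h; have h1 := cW_to0 h.
have h2 := cW_trans pP (cW_sym pP (@NF_sub S p pP n 1%N t s (leqnn 1))) h1.
have := WD _ h2.
suff -> : Theta p pi w (fun j => t j - s j) n = Theta p pi w t n - Theta p pi w s n by [].
by rewrite /Theta -sumrB; apply: eq_bigr => j _; ring.
Qed.


Lemma Theta_add w (t s : nat -> S) m :
  Theta p pi w (fun j => t j + s j) m = Theta p pi w t m + Theta p pi w s m.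
Proof. by rewrite /Theta -big_split /=; apply: eq_bigr => j _; rewrite mulrDr. Qed.
Lemma Theta_scale w (t : nat -> S) a m :
  Theta p pi w (fun j => a * t j) m = a * Theta p pi w t m.
Proof. by rewrite /Theta mulr_sumr; apply: eq_bigr => j _; ring. Qed.
Lemma Theta0 w m : Theta p pi w (fun _ => 0) m = 0.
Proof. by rewrite /Theta big1 // => j _; rewrite mulr0. Qed.

Lemma ghost_at n' (x : 'I_n'.+1 -> S) i : (i < n'.+1)%N ->
  ghost p x (inord i) = gh p (fun j => x (inord j)) i.
Proof. by move=> hi; rewrite ghost_gh inordK. Qed.

Lemma gh_teich n' (c : S) i : (i < n'.+1)%N ->
  gh p (fun j => teich n'.+1 c (inord j)) i = c ^+ (p ^ i).
Proof.
move=> hi; rewrite (@gh_ext S p _ (fun j => if j == 0%N then c else 0)); last first.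
  by move=> j hj; rewrite /teich inordK //; apply: leq_ltn_trans hj hi.
by rewrite gh_single // subn0 expr0 mul1r.
Qed.

Lemma gh_versch n' (c : S) i : (i < n'.+1)%N ->
  gh p (fun j => verschV n'.+1 c (inord j)) i = if i == n' then P ^+ n' * c else 0.
Proof.
move=> hi; rewrite (@gh_ext S p _ (fun j => if j == n' then c else 0)); last first.
  by move=> j hj; rewrite /verschV inordK //; apply: leq_ltn_trans hj hi.
rewrite gh_single //; case: ifP => h.
  have -> : i = n' by apply/eqP; rewrite eqn_leq h -ltnS hi.
  by rewrite eqxx subnn expn0 expr1.
by rewrite ifN //; apply/eqP => e; move: h; rewrite e leqnn.
Qed.

Lemma main_nz n' : exists (f : ('I_n'.+1 -> S) -> S) (w : S),
    unit_mod p w /\ Qlinear p (p_i p pi n'.+1) f /\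
    cong (p_i p pi n'.+1) (f (teich n'.+1 1)) 1 /\
    (forall a b : S, cong P (b ^+ (p ^ n'.+1)) a ->
       cong (p_i p pi n'.+1) (f (verschV n'.+1 a)) (w * p_i p pi n'.+1.-1 * b)).
Proof.
have [w [w0 [wu WD]]] := @WD_all S p pP pi tf0 hpi0 hpiS hinj hsurj n'.+1 isT.
pose gx (x : 'I_n'.+1 -> S) := gh p (fun j => x (inord j)).
have hdec : forall x, exists t, cW p n'.+1 (gx x) (NF p 1 t).
  move=> x; apply: (Dec pP (tf tf0) (surjS hsurj)); by exists (fun j => x (inord j)).
pose tof x := proj1_sig (@constructive_indefinite_description _ _ (hdec x)).
have htof : forall x, cW p n'.+1 (gx x) (NF p 1 (tof x)).
  by move=> x; exact: (proj2_sig (@constructive_indefinite_description _ _ (hdec x))).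
have WC := WD_cong WD.
exists (fun x => Theta p pi w (tof x) n'.+1), (w n').
split; first exact: wu.
split; first split; [|split|].
- move=> x y z hz; rewrite /cong.
  have hg : cW p n'.+1 (gx z) (fun i => gx x i + gx y i).
    by apply: cW_eq => // i hi; have := hz (inord i); rewrite !ghost_at.
  have h := cW_trans pP (cW_trans pP (cW_trans pP (cW_sym pP (htof z)) hg)
     (cW_add pP (htof x) (htof y))) (NF_PA pP n'.+1 (tof x) (tof y) (leqnn 1)).
  by have := WC _ _ h; rewrite Theta_add.
- move=> x z hz; rewrite /cong.
  have hg : cW p n'.+1 (gx z) (fun _ => 0).
    exists (gx x); split; first by exists (fun j => x (inord j)).
    by move=> i hi; rewrite subr0; have := hz (inord i); rewrite !ghost_at.
  have h0 : cW p n'.+1 (fun _ => 0 : S) (NF p 1 (fun _ => 0)).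
    by apply: cW_eq => // i _; rewrite /NF big1 // => j _; rewrite zexp // mulr0.
  have h := cW_trans pP (cW_trans pP (cW_sym pP (htof z)) hg) h0.
  by have := WC _ _ h; rewrite Theta0 subr0.
- move=> a x z hz; rewrite /cong.
  have hg : cW p n'.+1 (gx z) (fun i => (a ^+ p) ^+ (p ^ i) * gx x i).
    apply: cW_eq => // i hi; have := hz (inord i); rewrite !ghost_at // gh_teich //.
  have h1 := cW_TM (a ^+ p) (htof x).
  have h2 : cW p n'.+1 (fun i => (a ^+ p) ^+ (p ^ i) * NF p 1 (tof x) i) (NF p 1 (fun j => a * tof x j)).
    by apply: cW_eq => // i _; rewrite NF_scale.
  have h := cW_trans pP (cW_trans pP (cW_trans pP (cW_sym pP (htof z)) hg) h1) h2.
  by have := WC _ _ h; rewrite Theta_scale.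
- split.
    rewrite /cong.
    have hg : cW p n'.+1 (gx (teich n'.+1 1)) (NF p 1 (fun j => if j == 0%N then 1 else 0)).
      apply: cW_eq => // i hi; rewrite /gx gh_teich // NF_single //.
      by rewrite expr1n expr0 mul1r expr1n.
    have h := cW_trans pP (cW_sym pP (htof _)) hg.
    by have := WC _ _ h; rewrite Theta_single // w0 pp0 !mul1r.
  move=> a b [c hc]; rewrite /cong.
  have hg : cW p n'.+1 (gx (verschV n'.+1 a)) (NF p 1 (fun j => if j == n' then b else 0)).
    exists (gh p (fun j => if j == n' then - c else 0)); split.
      by exists (fun j => if j == n' then - c else 0).
    move=> i hi; rewrite /gx gh_versch // NF_single //.
    rewrite (gh_single pP).
    case: (eqVneq i n') => [->|ne].
      rewrite leqnn subnn expn0 expr1.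
      have -> : a = b ^+ (p ^ n'.+1) - P * c by rewrite -hc; ring.
      by rewrite addn1; ring.
    have -> : (n' <= i)%N = false by apply/negbTE; rewrite -ltnNge ltn_neqAle ne -ltnS hi.
    by rewrite subrr mulr0.
  have h := cW_trans pP (cW_sym pP (htof _)) hg.
  by have := WC _ _ h; rewrite Theta_single.
Qed.

End MainNZ.



Section Lift.
Variable R : comPzRingType.
Hypothesis nz : (1 : R) != 0.
Definition Rn : Type := R.
HB.instance Definition _ := GRing.ComPzRing.on Rn.
HB.instance Definition _ := GRing.PzSemiRing_isNonZero.Build Rn nz.
Definition Rn_nz : comNzRingType := Rn.
End Lift.

Theorem theorem4p7 (R : comPzRingType) (p : nat) (pi : nat -> R) (n : nat) :
  prime p -> ptorsion_free R p -> compatible_roots p pi ->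
  perfectoid_tf p pi -> (1 <= n)%N ->
  exists (f : ('I_n -> R) -> R) (w : R),
    unit_mod p w /\
    Qlinear p (p_i p pi n) f /\
    cong (p_i p pi n) (f (teich n 1)) 1 /\
    (forall a b : R, cong p%:R (b ^+ (p ^ n)) a ->
       cong (p_i p pi n) (f (verschV n a)) (w * p_i p pi n.-1 * b)).
Proof.
move=> pP tf0 [hpi0 hpiS] [_ [hsurj hinj]] n1.
case: n n1 => // n' _.
case: (eqVneq (1 : R) 0) => [e10|nz].
  have z : forall x : R, x = 0 by move=> x; rewrite -[x]mul1r e10 mul0r.
  have zz : forall a b : R, a = b by move=> a b; rewrite (z a) (z b).
  exists (fun _ => 0), 0; split; first by exists 0; exists 0; apply: zz.
  split; first by split; [|split] => *; exists 0; apply: zz.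
  by split => *; exists 0; apply: zz.
exact: (@main_nz (Rn_nz nz) p pP pi tf0 hpi0 hpiS hinj hsurj n').
Qed.
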